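(* For any random variable $X$ with values in a finite set $\mathcal{X}$, any $\delta\ge 0$ and any real $k$, $$\mathrm{H}^{\delta}_\infty(X)\ge k\iff\sum_{x\in\mathcal{X}}\max\left(P_X(x)-2^{-k},0\right)\le\delta.$$
   Context: $P_X(x)=\Pr[X=x]$. Min-entropy: $\mathrm{H}_\infty(Y)=-\log_2\max_y P_Y(y)$. The statistical distance of finitely supported distributions $X,Y$ is $d_1(X;Y)=\frac12\sum_z|P_X(z)-P_Y(z)|$ (sum over the union of supports). Smooth min-entropy: $\mathrm{H}^{\delta}_\infty(X)=\max\{\mathrm{H}_\infty(Y): Y \text{ finitely supported},\ d_1(X;Y)\le\delta\}$. *)

(* Defs.v *)
From HB Require Import structures.
From mathcomp Require Import all_boot all_order all_algebra.
From mathcomp Require Import finmap.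
From mathcomp Require Import all_classical all_reals all_analysis.
Set Implicit Arguments. Unset Strict Implicit. Unset Printing Implicit Defensive.
Import Order.TTheory GRing.Theory Num.Theory.
Local Open Scope ring_scope.

Section Defs.
Variables (R : realType) (T : choiceType).

Definition is_fsdist (Q : T -> R) (S : {fset T}) : Prop :=
  (forall x, 0 <= Q x) /\ (forall x, x \notin S -> Q x = 0) /\
  \sum_(x <- S) Q x = 1.

(* statistical distance; S must contain the union of the two supports *)
Definition dist1 (P Q : T -> R) (S : {fset T}) : R :=
  2^-1 * \sum_(z <- S) `|P z - Q z|.

Definition log2 (x : R) : R := ln x / ln 2.

Definition Hmin (Q : T -> R) (S : {fset T}) : R :=
  - log2 (\big[Num.max/0]_(y <- S) Q y).

Definition smooth_cands (P : T -> R) (X : {fset T}) (delta : R) : set R :=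
  [set r | exists (Q : T -> R) (S : {fset T}),
     is_fsdist Q S /\ dist1 P Q (fsetU S X) <= delta /\ r = Hmin Q S].

Definition Hsmooth (P : T -> R) (X : {fset T}) (delta : R) : \bar R :=
  ereal_sup [set r%:E | r in smooth_cands P X delta].
End Defs.

(* Main.v *)
Require Import Defs.
From HB Require Import structures.
From mathcomp Require Import all_boot all_order all_algebra.
From mathcomp Require Import finmap.
From mathcomp Require Import all_classical all_reals all_analysis.
From mathcomp Require Import lra ring.
Import Order.TTheory GRing.Theory Num.Theory.
Local Open Scope ring_scope.

Section Aux.
Context {R : realType} {T : choiceType}.

Lemma sum_const_seq (s : seq T) (a : R) : \sum_(x <- s) a = a *+ size s.
Proof. elim: s => [|y s IH]; first by rewrite big_nil. by rewrite big_cons IH mulrS. Qed.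

Lemma norm_max (a : R) : `|a| = Num.max a 0 *+ 2 - a.
Proof.
have [h|h] := leP a 0.
  rewrite ler0_norm //; lra.
rewrite gtr0_norm //; lra.
Qed.

Lemma sum_incl (f : T -> R) (A B : {fset T}) : (A `<=` B)%fset ->
  (forall x, x \notin A -> f x = 0) -> \sum_(x <- A) f x = \sum_(x <- B) f x.
Proof. by move=> AB h; apply: big_fset_incl => // x _; apply: h. Qed.

Lemma fsd_sum {Q : T -> R} {S B} : is_fsdist Q S -> (S `<=` B)%fset ->
  \sum_(x <- B) Q x = 1.
Proof. by move=> [_ [h1 h2]] SB; rewrite -(@sum_incl Q _ _ SB h1). Qed.

Lemma bigmax_ge0 (Q : T -> R) (S : seq T) : 0 <= \big[Num.max/0]_(y <- S) Q y.
Proof. by elim: S => [|y S IH]; rewrite ?big_nil ?big_cons // le_max IH orbT. Qed.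

Lemma bigmax_pos {Q : T -> R} {S : {fset T}} : is_fsdist Q S -> 0 < \big[Num.max/0]_(y <- S) Q y.
Proof.
move=> [h0 [h1 h2]].
set m := \big[Num.max/0]_(y <- S) Q y.
have : 1 <= m *+ size S.
  rewrite -h2 -sum_const_seq big_seq [X in _ <= X]big_seq.
  by apply: ler_sum => i iS; apply: le_bigmax_seq.
rewrite lt_neqAle bigmax_ge0 andbT; apply: contraTN => /eqP <-.
by rewrite mul0rn -ltNge ltr01.
Qed.

Lemma Q_le_max {Q : T -> R} {S : {fset T}} : is_fsdist Q S -> forall y, Q y <= \big[Num.max/0]_(y <- S) Q y.
Proof.
move=> [h0 [h1 h2]] y; case: (boolP (y \in S)) => yS.
  exact: le_bigmax_seq.
by rewrite h1 // bigmax_ge0.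
Qed.

Definition Fs (P : T -> R) (X : {fset T}) c := \sum_(x <- X) Num.max (P x - c) 0.

Lemma core {P Q : T -> R} {X S m} : is_fsdist P X -> is_fsdist Q S ->
  (forall y, Q y <= m) -> Fs P X m <= dist1 P Q (S `|` X)%fset.
Proof.
move=> HP HQ Hm.
have e1 : \sum_(x <- (S `|` X)%fset) `|P x - Q x| =
   (\sum_(x <- (S `|` X)%fset) Num.max (P x - Q x) 0) *+ 2.
  under eq_bigr do rewrite norm_max.
  rewrite sumrB sumrMnl sumrB (fsd_sum HP) ?fsubsetUr // (fsd_sum HQ) ?fsubsetUl //.
  by rewrite subrr subr0.
rewrite /dist1 e1.
have -> : forall z : R, 2^-1 * (z *+ 2) = z by move=> z; rewrite -mulr_natr; field.
rewrite /Fs -(@sum_incl (fun x => Num.max (P x - Q x) 0) X); last 2 first.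
- exact: fsubsetUr.
- move=> x xX; case: HP => _ [hP _]; rewrite hP //; case: HQ => h0 _.
  by rewrite max_r // sub0r oppr_le0 h0.
apply: ler_sum => x _; apply: le_max2 => //; by rewrite lerB.
Qed.

Lemma max_add (a b : R) : Num.max (a + b) 0 <= Num.max a 0 + Num.max b 0.
Proof.
have [h1|h1] := leP a 0; have [h2|h2] := leP b 0; have [h3|h3] := leP (a + b) 0; lra.
Qed.

Lemma minE (a c : R) : Num.min a c = a - Num.max (a - c) 0.
Proof.
have [h1|h1] := leP a c; have [h3|h3] := leP (a - c) 0; lra.
Qed.
End Aux.

Theorem lemma5 (R : realType) (T : choiceType) (Tinf : infinite_set [set: T])
  (X : {fset T}) (P : T -> R) (HP : is_fsdist P X)
  (delta : R) (hdelta : 0 <= delta) (k : R) :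
  (k%:E <= Hsmooth P X delta)%E <->
  \sum_(x <- X) Num.max (P x - 2 `^ (- k)) 0 <= delta.
Proof.
have ln2 : 0 < ln (2:R) by apply: ln_gt0; lra.
set c := 2 `^ (-k).
have c0 : 0 < c by apply: powR_gt0.
have lnc : ln c = - k * ln 2 by rewrite ln_powR.
have Hm_ge : forall (Q : T -> R) (S : {fset T}), is_fsdist Q S ->
    \big[Num.max/0]_(y <- S) Q y <= c -> k <= Hmin Q S.
  move=> Q S HQ hm; rewrite /Hmin /log2.
  have mp := bigmax_pos HQ.
  have : ln (\big[Num.max/0]_(y <- S) Q y) <= ln c by rewrite ler_ln // posrE.
  rewrite lnc => h.
  suff : ln (\big[Num.max/0]_(y <- S) Q y) / ln 2 <= -k by lra.
  by rewrite ler_pdivrMr.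
split.
- move=> hk; apply/negPn/negP; rewrite -ltNge => hlt.
  have n0 : (0 < size X)%N.
    rewrite lt0n; apply/negP => /eqP/size0nil hX.
    by move: HP => [_ [_]]; rewrite hX big_nil => /eqP; rewrite eq_sym oner_eq0.
  have nR : 0 < (size X)%:R :> R by rewrite ltr0n.
  set Fc := \sum_(x <- X) Num.max (P x - c) 0 in hlt.
  set eta := (Fc - delta) / (size X)%:R.
  have eta0 : 0 < eta by apply: divr_gt0 => //; lra.
  have etan : eta *+ size X = Fc - delta.
    by rewrite -mulr_natr /eta mulrAC -mulrA mulfV ?mulr1 // gt_eqF.
  set k0 := - (ln (c + eta) / ln 2).
  have k0k : k0 < k.
    have : ln c < ln (c + eta) by rewrite ltr_ln ?posrE; lra.
    rewrite lnc => h.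
    suff : -k < ln (c + eta) / ln 2 by rewrite /k0; lra.
    by rewrite ltr_pdivlMr.
  have : (Hsmooth P X delta <= k0%:E)%E.
    apply: ge_ereal_sup => _ [r [Q [S [HQ [hd ->]]]] <-]; rewrite lee_fin.
    set m := \big[Num.max/0]_(y <- S) Q y.
    have mp : 0 < m := bigmax_pos HQ.
    have hc := core HP HQ (Q_le_max HQ).
    have hFm : Fs P X m <= delta by apply: le_trans hc hd.
    have hme : c + eta <= m.
      rewrite leNgt; apply/negP => hm.
      have h1 : Fc <= Fs P X m + (Num.max (m - c) 0) *+ size X.
        rewrite /Fc /Fs -sum_const_seq -big_split; apply: ler_sum => x _.
        have -> : P x - c = (P x - m) + (m - c) by ring.
        exact: max_add.
      have h2 : Num.max (m - c) 0 < eta by rewrite gt_max eta0 andbT; lra.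
      have h3 : (Num.max (m - c) 0) *+ size X < eta *+ size X by rewrite ltr_pMn2r.
      lra.
    have : ln (c + eta) <= ln m by rewrite ler_ln ?posrE //; lra.
    move=> h; rewrite /Hmin /log2 /k0.
    suff : ln (c + eta) / ln 2 <= ln m / ln 2 by lra.
    by rewrite ler_pM2r // invr_gt0.
  move=> hsup; have := le_trans hk hsup; rewrite lee_fin; lra.
- move=> hF.
  set r := \sum_(x <- X) Num.max (P x - c) 0 in hF.
  have r0 : 0 <= r by apply: sumr_ge0 => x _; rewrite le_max lexx orbT.
  have r1 : r <= 1.
    case: (HP) => hP0 [_ <-]; apply: ler_sum => x _.
    by rewrite ge_max hP0 andbT; lra.
  have [N hN] : exists N : nat, c^-1 < N%:R.
    by exists (Num.Def.archi_bound c^-1); apply: archi_boundP; rewrite invr_ge0 ltW.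
  have inf : infinite_set ([set: T] `\` [set` X]) := infinite_setD Tinf (finite_fset X).
  have [B hB nB] := infinite_set_fset N inf.
  have BX : forall y, y \in B -> y \notin X.
    by move=> y yB; have [_ /negP] := hB y yB.
  have nB' : (N <= size B)%N := nB.
  have cn : 1 <= c * (size B)%:R.
    have : c^-1 < (size B)%:R by apply: lt_le_trans hN _; rewrite ler_nat.
    by rewrite -(ltr_pM2l c0) mulfV ?gt_eqF // => /ltW.
  have nR : 0 < (size B)%:R :> R.
    by rewrite ltr0n lt0n; apply/negP => /eqP h; move: (cn); rewrite h mulr0 ler10.
  set a := r / (size B)%:R.
  have a0 : 0 <= a by rewrite divr_ge0 // ltW.
  have ac : a <= c.
    rewrite ler_pdivrMr; [exact: (le_trans r1 cn) | exact: nR].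
  have an : a *+ size B = r by rewrite -mulr_natr mulfVK // gt_eqF.
  pose Q1 y := if y \in X then Num.min (P y) c else 0.
  pose Q2 y := if y \in B then a else 0.
  pose Q y := Q1 y + Q2 y.
  pose S := (X `|` B)%fset.
  case: (HP) => hP0 [hP1 hP2].
  have Q20 : forall y, 0 <= Q2 y by move=> y; rewrite /Q2; case: ifP.
  have sQ1 : \sum_(y <- S) Q1 y = 1 - r.
    rewrite -(@sum_incl _ _ Q1 X S) ?fsubsetUl //; last by move=> y /negbTE; rewrite /Q1 => ->.
    rewrite big_seq (eq_bigr (fun y => P y - Num.max (P y - c) 0)); last first.
      by move=> y yX; rewrite /Q1 yX minE.
    by rewrite -big_seq sumrB hP2.
  have sQ2 : \sum_(y <- S) Q2 y = r.
    rewrite -(@sum_incl _ _ Q2 B S) ?fsubsetUr //; last by move=> y /negbTE; rewrite /Q2 => ->.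
    rewrite big_seq (eq_bigr (fun y => a)); last by move=> y yB; rewrite /Q2 yB.
    by rewrite -big_seq sum_const_seq.
  have HQ : is_fsdist Q S.
    split; [|split].
    - move=> y; apply: addr_ge0 => //; rewrite /Q1; case: ifP => // _.
      by rewrite le_min hP0 ltW.
    - move=> y; rewrite /S in_fsetU negb_or => /andP [yX yB].
      by rewrite /Q /Q1 /Q2 (negbTE yX) (negbTE yB) addr0.
    - by rewrite big_split /= sQ1 sQ2 subrK.
  have Qc : \big[Num.max/0]_(y <- S) Q y <= c.
    apply: bigmax_le; first exact: ltW.
    move=> y _; rewrite /Q /Q1 /Q2; case: ifPn => yX.
      have -> : (y \in B) = false by apply/negP => /BX; rewrite yX.
      by rewrite addr0 ge_min lexx orbT.
    by rewrite add0r; case: ifP => // _; exact: ltW.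
  have dQ : dist1 P Q (S `|` X)%fset <= delta.
    have e : forall y, `|P y - Q y| =
        (if y \in X then Num.max (P y - c) 0 else 0) + Q2 y.
      move=> y; rewrite /Q /Q1; case: ifPn => yX.
        have -> : Q2 y = 0.
          by rewrite /Q2; case: ifP => // /BX; rewrite yX.
        rewrite !addr0 minE.
        have -> : forall u v : R, u - (u - v) = v by move=> u v; ring.
        by rewrite ger0_norm // le_max lexx orbT.
      by rewrite hP1 // !add0r normrN ger0_norm.
    rewrite /dist1 (eq_bigr _ (fun y _ => e y)) big_split /=.
    have -> : \sum_(i <- (S `|` X)%fset) Q2 i = r.
      rewrite -sQ2; apply/esym/sum_incl; first exact: fsubsetUl.
      by move=> y; rewrite /S /Q2 in_fsetU negb_or => /andP [_ /negbTE ->].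
    rewrite -(@sum_incl _ _ (fun y => if y \in X then Num.max (P y - c) 0 else 0) X)
      ?fsubsetUr //; last by move=> y /negbTE ->.
    rewrite big_seq (eq_bigr (fun y => Num.max (P y - c) 0)); last first.
      by move=> y ->.
    rewrite -big_seq -/r; lra.
  apply: (@le_trans _ _ (Hmin Q S)%:E); first by rewrite lee_fin; exact: Hm_ge.
  apply: ereal_sup_ubound; exists (Hmin Q S) => //.
  by exists Q, S.
Qed.
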